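(* The set of all bicoloured noncrossing configurations (of all sizes $n\ge1$), together with the composition maps $\circ_i$ described in the context and the unique bicoloured noncrossing configuration of size $1$ as unit, forms a (nonsymmetric) operad, where the arity of a configuration is its size.
   Context: For $n\ge2$, a bicoloured noncrossing configuration (BNC) of size $n$ is a regular polygon with $n+1$ vertices numbered $1,\dots,n+1$ clockwise, together with two disjoint sets of arcs, a set of blue arcs and a set of red arcs. An arc is a pair $(i,j)$ with $1\le i<j\le n+1$. The arcs $(i,i+1)$, $1\le i\le n$, are the edges ($(i,i+1)$ is the $i$th edge), $(1,n+1)$ is the base, and all other arcs are diagonals. The required conditions are: no two coloured (blue or red) arcs cross, where $(i,j)$ and $(k,l)$ cross iff $i<k<j<l$ or $k<i<l<j$; and every red arc is a diagonal. An arc that is neither blue nor red is uncoloured. By convention there is exactly one BNC of size $1$: a segment $(1,2)$ that is blue; it serves both as its unique ($1$st) edge and as its base. Composition: let $\mathfrak C$ and $\mathfrak D$ be BNCs of sizes $n$ and $m$, and let $i\in[n]$. Then $\mathfrak E=\mathfrak C\circ_i\mathfrak D$ is the BNC of size $n+m-1$ obtained by gluing the base of $\mathfrak D$ onto the $i$th edge of $\mathfrak C$ (and reshaping into a regular polygon). Concretely, an arc $(a,b)$ of $\mathfrak C$ becomes the arc $(\sigma(a),\sigma(b))$ of $\mathfrak E$, where $\sigma(v)=v$ if $v\le i$ and $\sigma(v)=v+m-1$ if $v>i$. An arc $(a,b)$ of $\mathfrak D$ becomes $(a+i-1,b+i-1)$. All these arcs keep their colours, except the arc $(i,i+m)$ of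 $\mathfrak E$ (the common image of the $i$th edge of $\mathfrak C$ and the base of $\mathfrak D$). This arc is red if both the $i$th edge of $\mathfrak C$ and the base of $\mathfrak D$ are uncoloured, blue if both are blue, and uncoloured otherwise. *)

(* Defs.v *)
From mathcomp Require Import all_boot.
Set Implicit Arguments. Unset Strict Implicit. Unset Printing Implicit Defensive.

Inductive colour := Blue | Red | Unc.

(** Only pairs (a,b) with
    1 <= a < b <= n+1 are arcs; well-formedness ([bnc_wf]) requires
    every other pair to be uncoloured, so the configuration is
    determined by its size and the colours of its arcs. *)
Record bnc := BNC { bsize : nat; bcol : nat -> nat -> colour }.

Definition is_arc (n a b : nat) : bool := [&& 1 <= a, a < b & b <= n.+1].
(* diagonal: an arc that is neither an edge (i,i+1) nor the base (1,n+1) *)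
Definition is_diag (n a b : nat) : bool :=
  [&& is_arc n a b, b != a.+1 & ~~ ((a == 1) && (b == n.+1))].

Definition crossing (a b c d : nat) : Prop :=
  (a < c < b /\ b < d) \/ (c < a < d /\ d < b).

Definition bnc_wf (C : bnc) : Prop :=
  let n := bsize C in
  [/\ 1 <= n,
      (forall a b, ~~ is_arc n a b -> bcol C a b = Unc),
      (forall a b, bcol C a b = Red -> is_diag n a b),
      (forall a b c d, bcol C a b <> Unc -> bcol C c d <> Unc -> ~ crossing a b c d)
    & (n = 1 -> bcol C 1 2 = Blue)].
(* For n = 1 the only arc (1,2) is blue; it is both edge and base. *)

Definition glue_colour (c d : colour) : colour :=
  match c, d with
  | Unc, Unc => Red
  | Blue, Blue => Blue
  | _, _ => Unc
  end.

Definition bnc_comp (C : bnc) (i : nat) (D : bnc) : bnc :=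
  let m := bsize D in
  let inner v := (i < v) && (v < i + m) in
  let unsig v := if v <= i then v else v - (m - 1) in
  BNC (bsize C + m - 1)
    (fun a b =>
       if (a == i) && (b == i + m) then glue_colour (bcol C i i.+1) (bcol D 1 m.+1)
       else if (i <= a) && (b <= i + m) then bcol D (a - i).+1 (b - i).+1
       else if inner a || inner b then Unc
       else bcol C (unsig a) (unsig b)).

Definition bnc_unit : bnc :=
  BNC 1 (fun a b => if (a == 1) && (b == 2) then Blue else Unc).

(** Nonsymmetric operad in partial-composition form, on the carrier
    {x : T | P x}, with arity [ar], compositions [comp x i y] (for
    1 <= i <= ar x) and unit [one]. *)
Definition ns_operad (T : Type) (P : T -> Prop) (ar : T -> nat)
    (comp : T -> nat -> T -> T) (one : T) : Prop :=
  (P one /\ ar one = 1) /\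
  (forall x y i, P x -> P y -> 1 <= i <= ar x ->
     P (comp x i y) /\ ar (comp x i y) = ar x + ar y - 1) /\
  (forall x, P x -> comp one 1 x = x) /\
  (forall x i, P x -> 1 <= i <= ar x -> comp x i one = x) /\
  (forall x y z i j, P x -> P y -> P z -> 1 <= i <= ar x -> 1 <= j <= ar y ->
     comp (comp x i y) (i + j - 1) z = comp x i (comp y j z)) /\
  (forall x y z i j, P x -> P y -> P z -> 1 <= i -> i < j -> j <= ar x ->
     comp (comp x i y) (j + ar y - 1) z = comp (comp x j z) i y).

(* Main.v *)
Require Import Defs.
From mathcomp Require Import all_boot.
From mathcomp Require Import zify.
From Stdlib Require Import FunctionalExtensionality.

Ltac datom c := lazymatch c with
  | context [if ?d then _ else _] => datom d
  | ?p && ?q => datom p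
  | ?p || ?q => datom p
  | ~~ ?p => datom p
  | _ => let E := fresh "E" in destruct c eqn:E; cbn [andb orb negb]; try (exfalso; lia)
  end.
Ltac dif := repeat match goal with |- context [if ?c then _ else _] => datom c end.

Lemma colc C a b c d : a = c -> b = d -> bcol C a b = bcol C c d.
Proof. by move=> -> ->. Qed.
Lemma glc a b c d : a = c -> b = d -> glue_colour a b = glue_colour c d.
Proof. by move=> -> ->. Qed.
Ltac ceq := first [reflexivity | apply: colc; lia | apply: glc; [ceq|ceq] ].

Definition col0 := bcol.
Lemma colE C a b : bnc_wf C -> bcol C a b =
  if [&& 1 <= a, a < b & b <= (bsize C).+1] then col0 C a b else Unc.
Proof. case=> _ H _ _ _. case: ifP => // h. by rewrite H // /is_arc h. Qed.

Lemma bnc_eq C D : bsize C = bsize D -> (forall a b, bcol C a b = bcol D a b) -> C = D.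
Proof. case: C D => n f [m g] /= -> H. f_equal. apply: functional_extensionality => a.
apply: functional_extensionality => b. exact: H. Qed.

Ltac unc := repeat match goal with |- context [bcol ?C ?p ?q] => match goal with H : bnc_wf C |- _ => rewrite (colE C p q H) end end; dif; rewrite /col0; try ceq.

Lemma edge_nr C a : bnc_wf C -> bcol C a a.+1 <> Red.
Proof. case=> _ _ H _ _ /H. by rewrite /is_diag eqxx /= andbF. Qed.
Lemma base_nr C : bnc_wf C -> bcol C 1 (bsize C).+1 <> Red.
Proof. case=> _ _ H _ _ /H. by rewrite /is_diag !eqxx /= !andbF. Qed.
Lemma one_blue C : bnc_wf C -> bsize C = 1 -> bcol C 1 2 = Blue.
Proof. by case=> _ _ _ _ H /H. Qed.
Lemma glue_assoc c e : c <> Red -> e <> Red ->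
  glue_colour (glue_colour c Blue) e = glue_colour c (glue_colour Blue e).
Proof. by case: c; case: e. Qed.

Lemma arcNU C p q : bnc_wf C -> bcol C p q <> Unc -> [&& 1 <= p, p < q & q <= (bsize C).+1].
Proof. case=> _ H _ _ _ N. apply/negPn/negP => h. by apply: N; apply: H. Qed.
Lemma ncr C p q r s : bnc_wf C -> bcol C p q <> Unc -> bcol C r s <> Unc -> ~ crossing p q r s.
Proof. case=> _ _ _ H _. exact: H. Qed.
Lemma redD C p q : bnc_wf C -> bcol C p q = Red -> is_diag (bsize C) p q.
Proof. case=> _ _ H _ _. exact: H. Qed.
Lemma glueR c d : glue_colour c d = Red -> c = Unc /\ d = Unc.
Proof. by case: c; case: d. Qed.
Arguments arcNU {C p q}.
Arguments ncr {C p q r s}.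
Arguments redD {C p q}.
Ltac arcs := repeat match goal with H : bcol ?C _ _ <> Unc |- _ =>
   match goal with W : bnc_wf C |- _ => have := arcNU W H; clear H end end.
Lemma compWF x y i : bnc_wf x -> bnc_wf y -> 1 <= i <= bsize x -> bnc_wf (bnc_comp x i y).
Proof.
move=> Hx Hy Hi. have hx : 1 <= bsize x by case: Hx.
have hy : 1 <= bsize y by case: Hy.
split => /=.
{ lia. }
{ move=> a b; rewrite /is_arc => Na. dif. all: try solve [ceq]. all: try unc. }
{ move=> a b. dif.
  all: try (move/(redD Hy); rewrite /is_diag /is_arc; lia).
  all: try (move/(redD Hx); rewrite /is_diag /is_arc; lia).
  all: try discriminate.
  all: move/glueR => [c1 c2].
  all: case: (ltnP 1 (bsize y)) => hm; last first.
  all: try (have ey: bsize y = 1 by lia); try (rewrite ey (one_blue y Hy ey) in c2; discriminate).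
  all: case: (ltnP 1 (bsize x)) => hn; last first.
  all: try (have ex: bsize x = 1 by lia); try (have ei: i = 1 by lia).
  all: try (subst i; rewrite (one_blue x Hx ex) in c1; discriminate).
  all: rewrite /is_diag /is_arc; try lia.
}
{ move=> a b c d. dif.
  all: move=> H1 H2; rewrite /crossing.
  all: try solve [exfalso; first [by apply: H1 | by apply: H2]].
  all: try have := ncr Hx H1 H2; try have := ncr Hy H1 H2.
  all: arcs; rewrite /crossing; try lia.
}
{ move=> e. dif.
  all: have ei : i = 1 by lia.
  all: have ey : bsize y = 1 by lia.
  all: have ex : bsize x = 1 by lia.
  all: subst i; by rewrite ey (one_blue x Hx ex) (one_blue y Hy ey). }
Qed.
Lemma seqA x y z i j : bnc_wf x -> bnc_wf y -> bnc_wf z -> 1 <= i <= bsize x -> 1 <= j <= bsize y ->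
     bnc_comp (bnc_comp x i y) (i + j - 1) z = bnc_comp x i (bnc_comp y j z).
Proof.
move=> Hx Hy Hz Hi Hj.
have hx : 1 <= bsize x by case: Hx.
have hy : 1 <= bsize y by case: Hy.
have hz : 1 <= bsize z by case: Hz.
apply: bnc_eq => /=; first lia.
move=> a b.
dif.
all: try solve [ceq].
all: try unc.
all: have ej : j = 1 by lia.
all: have ey : bsize y = 1 by lia.
all: subst j; rewrite ey (one_blue y Hy ey); apply: glue_assoc; [exact: edge_nr | exact: base_nr].
Qed.
Lemma parA x y z i j : bnc_wf x -> bnc_wf y -> bnc_wf z -> 1 <= i -> i < j -> j <= bsize x ->
     bnc_comp (bnc_comp x i y) (j + bsize y - 1) z = bnc_comp (bnc_comp x j z) i y.
Proof.
move=> Hx Hy Hz Hi Hij Hj.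
have hx : 1 <= bsize x by case: Hx.
have hy : 1 <= bsize y by case: Hy.
have hz : 1 <= bsize z by case: Hz.
apply: bnc_eq => /=; first lia.
move=> a b.
dif.
all: try solve [ceq].
all: unc.
Qed.
Lemma unitL x : bnc_wf x -> bnc_comp bnc_unit 1 x = x.
Proof.
move=> Hx. have hx : 1 <= bsize x by case: Hx.
apply: bnc_eq => /=; first lia.
move=> a b. dif. all: try solve [ceq]. all: try unc.
all: have ea : a = 1 by lia.
all: have eb : b = (bsize x).+1 by lia.
all: subst a b; have := base_nr x Hx; by case: (bcol x 1 _).
Qed.
Lemma unitR x i : bnc_wf x -> 1 <= i <= bsize x -> bnc_comp x i bnc_unit = x.
Proof.
move=> Hx Hi. have hx : 1 <= bsize x by case: Hx.
apply: bnc_eq => /=; first lia.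
move=> a b. dif. all: try solve [ceq]. all: try unc.
all: have ea : a = i by lia.
all: have eb : b = i.+1 by lia.
all: subst a b; have := edge_nr x i Hx; by case: (bcol x i _).
Qed.

Lemma unitWF : bnc_wf bnc_unit.
Proof.
split=> /=.
  { done. }
  { move=> a b; rewrite /is_arc /= => N; dif; done. }
  { move=> a b; dif; discriminate. }
  { move=> a b c d; dif; move=> H1 H2; rewrite /crossing; try lia;
    exfalso; first [by apply: H1 | by apply: H2]. }
  { done. }
Qed.

Theorem proposition2p1 : ns_operad bnc_wf bsize bnc_comp bnc_unit.
Proof.
split.
{ split; [exact: unitWF | done]. }
split.
{ move=> x y i Hx Hy Hi; split; [exact: compWF | done]. }
split.
{ exact: unitL. }
split.
{ move=> x i Hx Hi; exact: unitR. }
split.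
{ move=> x y z i j Hx Hy Hz Hi Hj; exact: seqA. }
move=> x y z i j Hx Hy Hz Hi Hij Hj; exact: parA.
Qed.
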